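(* Let $K\ge2$ and $\alpha\in\mathbb{R}$, and define \[ C_{\alpha,K}:=2\cdot\inf\left\{\frac{D_\alpha(p\Vert q)}{\|p-q\|_1^2}: p,q\in\operatorname{relint}(\Delta^K),\ p\ne q\right\}. \] Then \[ C_{\alpha,K}=\inf\left\{\sum_{k=1}^K v_k^2\gamma_k^{\alpha-2}: v\in T^K,\ \gamma\in\operatorname{relint}(\Delta^K)\right\}, \] where $T^K:=\{v\in\mathbb{R}^K:\|v\|_1=1,\ \sum_{k=1}^K v_k=0\}$.
   Context: $\Delta^K=\{p\in[0,1]^K:\sum_k p_k=1\}$, $\operatorname{relint}(\Delta^K)=\Delta^K\cap(0,1)^K$. For $p\in(0,+\infty)^K$: $S_\alpha(p)=\frac{\sum_k p_k^\alpha}{\alpha(1-\alpha)}$ if $\alpha\notin\{0,1\}$, $S_0(p)=\sum_k\ln p_k$, $S_1(p)=-\sum_k p_k\ln p_k$. $D_\alpha(p\Vert q)=-S_\alpha(p)+S_\alpha(q)+\langle\nabla S_\alpha(q),p-q\rangle$ is the Bregman divergence of $-S_\alpha$ on $(0,+\infty)^K$. $\|x\|_1=\sum_k|x_k|$. *)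

(* Defs.v *)
From HB Require Import structures.
From mathcomp Require Import all_boot all_order all_algebra.
From mathcomp Require Import all_classical all_reals all_analysis.
Set Implicit Arguments. Unset Strict Implicit. Unset Printing Implicit Defensive.
Import Order.TTheory GRing.Theory Num.Theory.
Import numFieldNormedType.Exports.
Local Open Scope classical_set_scope.
Local Open Scope ring_scope.

Definition Salpha (R : realType) (K : nat) (alpha : R) (p : 'I_K -> R) : R :=
  if alpha == 0 then \sum_(k < K) ln (p k)
  else if alpha == 1 then - \sum_(k < K) p k * ln (p k)
  else (\sum_(k < K) p k `^ alpha) / (alpha * (1 - alpha)).

Definition gradS (R : realType) (K : nat) (alpha : R) (q : 'I_K -> R) (k : 'I_K) : R :=
  derive1 (fun t : R => Salpha alpha (fun j => if j == k then q j + t else q j)) 0.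

(* Bregman divergence of -S_alpha *)
Definition Dalpha (R : realType) (K : nat) (alpha : R) (p q : 'I_K -> R) : R :=
  - Salpha alpha p + Salpha alpha q + \sum_(k < K) gradS alpha q k * (p k - q k).

Definition relint_simplex (R : realType) (K : nat) (p : 'I_K -> R) : Prop :=
  (forall k, 0 <= p k <= 1) /\ \sum_(k < K) p k = 1 /\ (forall k, 0 < p k < 1).

Definition norm1 (R : realType) (K : nat) (x : 'I_K -> R) : R := \sum_(k < K) `|x k|.

Definition TK (R : realType) (K : nat) (v : 'I_K -> R) : Prop :=
  norm1 v = 1 /\ \sum_(k < K) v k = 0.

Definition C_alpha (R : realType) (K : nat) (alpha : R) : \bar R :=
  (2%:E * ereal_inf [set x : \bar R | exists p q : 'I_K -> R,
     [/\ relint_simplex p, relint_simplex q, p <> q &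
       x = (Dalpha alpha p q / (norm1 (fun k => p k - q k)) ^+ 2)%:E]])%E.

(* Main.v *)
Require Import Defs.
From HB Require Import structures.
From mathcomp Require Import all_boot all_order all_algebra.
From mathcomp Require Import all_classical all_reals all_analysis.
From mathcomp Require Import ring lra.
Import Order.TTheory GRing.Theory Num.Theory.
Import numFieldNormedType.Exports.
Local Open Scope classical_set_scope.
Local Open Scope ring_scope.

Section T.
Context {R : realType}.
Context (alpha : R).
Lemma is_derive_cont (f : R -> R) (x df : R) : is_derive x (1:R) f df -> {for x, continuous f}.
Proof. move=> [fd _]. exact/differentiable_continuous/derivable1_diffP. Qed.

Lemma taylor2 (G G1 G2 : R -> R) (s m : R) : 0 <= s ->
  (forall t, 0 <= t <= s -> is_derive t 1 G (G1 t)) ->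
  (forall t, 0 <= t <= s -> is_derive t 1 G1 (G2 t)) ->
  (forall t, 0 <= t <= s -> m <= G2 t) ->
  m * s ^+ 2 / 2 <= G s - G 0 - G1 0 * s.
Proof.
move=> s0 dG dG1 mG2.
pose H1 := G1 - cst (G1 0) - m \*: (@id R).
have dH1 t : 0 <= t <= s -> is_derive t 1 H1 (G2 t - m).
  move=> ts; rewrite /H1.
  have := dG1 t ts => dg.
  apply: is_derive_eq.
  by rewrite subr0 -[m%:A]/(m * 1) mulr1.
have H1ge0 t : 0 <= t <= s -> 0 <= H1 t.
  move=> /andP[t0 ts].
  have -> : 0 = H1 0 by rewrite /H1 !fctE /= subrr -[m *: _]/(m * 0) mulr0 subr0.
  apply: (@ger0_derive1_ndecr _ H1 0 s) => //.
  - move=> x; rewrite in_itv /= => /andP[x0 xs].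
    by case: (dH1 x); [rewrite ltW ?ltW|].
  - move=> x; rewrite in_itv /= => /andP[x0 xs].
    rewrite derive1E; have [_ ->] := dH1 x (ltac:(by rewrite !ltW)).
    by rewrite subr_ge0 mG2 // !ltW.
  - apply: continuous_in_subspaceT => x; rewrite inE /= in_itv /= => xs.
    exact: is_derive_cont (dH1 x xs).
pose H := G - cst (G 0) - (G1 0) \*: (@id R) - (m / 2) \*: (fun t : R => t ^+ 2).
have dH t : 0 <= t <= s -> is_derive t 1 H (H1 t).
  move=> ts; rewrite /H /H1.
  have := dG t ts => dg.
  apply: is_derive_eq.
  rewrite -[LHS]/(G1 t - 0 - G1 0 * 1 - (m/2) * (t * 1 + t * 1)).
  rewrite -[RHS]/(G1 t - G1 0 - m * t).
  by field.
have := H1ge0.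
have : H 0 <= H s.
  apply: (@ger0_derive1_ndecr _ H 0 s) => //.
  - move=> x; rewrite in_itv /= => /andP[x0 xs].
    by case: (dH x); [rewrite ltW ?ltW|].
  - move=> x; rewrite in_itv /= => /andP[x0 xs].
    rewrite derive1E; have [_ ->] := dH x (ltac:(by rewrite !ltW)).
    by rewrite H1ge0 // !ltW.
  - apply: continuous_in_subspaceT => x; rewrite inE /= in_itv /= => xs.
    exact: is_derive_cont (dH x xs).
rewrite -[H 0]/(G 0 - G 0 - G1 0 * 0 - (m/2) * (0 ^+ 2)).
rewrite -[H s]/(G s - G 0 - G1 0 * s - (m/2) * (s ^+ 2)).
move=> h _; lra.
Qed.

Definition ff (x : R) : R := if alpha == 0 then - ln x else if alpha == 1 then x * ln x
  else - (x `^ alpha / (alpha * (1 - alpha))).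
Definition f1 (x : R) : R := if alpha == 1 then ln x + 1 else x `^ (alpha - 1) / (alpha - 1).

Lemma ff_der (x : R) : 0 < x -> is_derive x (1:R) ff (f1 x).
Proof.
move=> x0; rewrite /ff /f1.
have [a0|a0] := eqVneq alpha 0.
  rewrite a0 eq_sym oner_eq0.
  have -> : (fun x : R => - ln x) = - (@ln R) by [].
  apply: (is_derive_eq (is_deriveN (is_derive1_ln x0))).
  by rewrite sub0r powR_inv1 ?ltW // invrN invr1 mulrN1.
have [a1|a1] := eqVneq alpha 1.
  have -> : (fun x : R => x * ln x) = (@id R) * (@ln R) by [].
  apply: (is_derive_eq (is_deriveM (is_derive_id x 1) (is_derive1_ln x0))).
  rewrite /= -[x *: _]/(x * x^-1) -[ln x *: _]/(ln x * 1) divff ?gt_eqF //.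
  by rewrite mulr1 addrC.
have -> : (fun x : R => - (x `^ alpha / (alpha * (1 - alpha)))) =
   - ((alpha * (1 - alpha))^-1 \*: (fun y : R => y `^ alpha)).
  by apply/funext => y /=; rewrite /GRing.scale /= mulrC.
apply: (is_derive_eq (is_deriveN (is_deriveZ (alpha * (1 - alpha))^-1 (is_derive1_powR alpha x0)))).
rewrite -[_ *: _]/((alpha * (1 - alpha))^-1 * (alpha * x `^ (alpha - 1))).
have h1 : 1 - alpha != 0 by rewrite subr_eq0 eq_sym.
have h2 : alpha - 1 != 0 by rewrite subr_eq0.
field. by rewrite a0 h1 h2.
Qed.

Lemma f1_der (x : R) : 0 < x -> is_derive x (1:R) f1 (x `^ (alpha - 2)).
Proof.
move=> x0; rewrite /f1.
have [a1|a1] := eqVneq alpha 1.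
  have -> : (fun x : R => ln x + 1) = (@ln R) + cst 1 by [].
  apply: (is_derive_eq (is_deriveD (is_derive1_ln x0) (is_derive_cst _ _ _))).
  have -> : alpha - 2 = -1 by rewrite a1; lra.
  by rewrite powR_inv1 ?ltW // addr0.
have -> : (fun x : R => x `^ (alpha - 1) / (alpha - 1)) =
   (alpha - 1)^-1 \*: (fun y : R => y `^ (alpha - 1)).
  by apply/funext => y /=; rewrite /GRing.scale /= mulrC.
apply: (is_derive_eq (is_deriveZ (alpha - 1)^-1 (is_derive1_powR (alpha - 1) x0))).
rewrite -[_ *: _]/((alpha - 1)^-1 * ((alpha - 1) * x `^ (alpha - 1 - 1))).
have h2 : alpha - 1 != 0 by rewrite subr_eq0.
rewrite mulrA mulVf // mul1r; congr (_ `^ _); lra.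
Qed.

Lemma Salpha_ff (K : nat) (p : 'I_K -> R) : Salpha alpha p = - \sum_(k < K) ff (p k).
Proof.
rewrite /Salpha /ff; have [a0|a0] := eqVneq alpha 0.
  by rewrite -sumrN; apply: eq_bigr => k _; rewrite opprK.
have [a1|a1] := eqVneq alpha 1; first by rewrite -sumrN.
rewrite -sumrN mulr_suml; apply: eq_bigr => k _; rewrite opprK.
by [].
Qed.

Lemma inner_der (a b t : R) : is_derive t (1:R) (fun t : R => a + t * b) b.
Proof.
have -> : (fun t : R => a + t * b) = cst a + b \*: (@id R).
  by apply/funext => y /=; rewrite /GRing.scale /= mulrC.
apply: is_derive_eq.
by rewrite add0r -[_ *: _]/(b * 1) mulr1.
Qed.

Lemma sum_comp_der (K : nat) (F F' : 'I_K -> R -> R) (q d : 'I_K -> R) (t : R) :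
  (forall k, is_derive (q k + t * d k) (1:R) (F k) (F' k (q k + t * d k))) ->
  is_derive t (1:R) (fun t => \sum_(k < K) F k (q k + t * d k))
     (\sum_(k < K) F' k (q k + t * d k) * d k).
Proof.
move=> h.
have -> : (fun t => \sum_(k < K) F k (q k + t * d k)) =
   \sum_(k < K) (F k \o (fun t => q k + t * d k)).
  by apply/funext => y; rewrite fct_sumE.
apply: is_derive_sum => k.
exact: (@is_derive1_comp _ (F k) (fun t => q k + t * d k) t _ _ (h k) (inner_der _ _ _)).
Qed.

Lemma gradS_eq (K : nat) (q : 'I_K -> R) (k : 'I_K) : (forall j, 0 < q j) ->
  gradS alpha q k = - f1 (q k).
Proof.
move=> q0; rewrite /gradS.
have -> : (fun t : R => Salpha alpha (fun j => if j == k then q j + t else q j)) =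
   (fun t => - (ff (q k + t * 1) + \sum_(j < K | j != k) ff (q j))).
  apply/funext => t; rewrite Salpha_ff (bigD1 k) //= eqxx mulr1; congr (- (_ + _)).
  by apply: eq_bigr => j /negbTE ->.
have h : is_derive (0:R) (1:R) (fun t => - (ff (q k + t * 1) + \sum_(j < K | j != k) ff (q j)))
    (- (f1 (q k + 0 * 1) * 1 + 0)).
  apply: is_deriveN; apply: is_deriveD.
  apply: (is_derive1_comp _ (inner_der _ _ _)).
  by apply: ff_der; rewrite mul0r addr0.
by rewrite derive1E derive_val mul0r addr0 mulr1 addr0.
Qed.

Lemma sum3 (K : nat) (a b c : 'I_K -> R) :
  \sum_(k < K) (a k - b k - c k) = \sum_(k < K) a k - \sum_(k < K) b k - \sum_(k < K) c k.
Proof. by rewrite !big_split /= !sumrN. Qed.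

Lemma Dalpha_eq (K : nat) (p q : 'I_K -> R) : (forall j, 0 < q j) ->
  Dalpha alpha p q = \sum_(k < K) (ff (p k) - ff (q k) - f1 (q k) * (p k - q k)).
Proof.
move=> q0; rewrite /Dalpha !Salpha_ff opprK sum3.
rewrite [X in _ + X](eq_bigr (fun k => - (f1 (q k) * (p k - q k)))).
  by rewrite sumrN.
by move=> k _; rewrite gradS_eq // mulNr.
Qed.

Lemma f1_der_scaled (c x : R) : 0 < x -> is_derive x (1:R) (fun y => c * f1 y) (c * x `^ (alpha - 2)).
Proof.
move=> x0; have -> : (fun y => c * f1 y) = c \*: f1 by [].
apply: (is_derive_eq (is_deriveZ c (f1_der _ x0))); done.
Qed.

Lemma Gder (K : nat) (q d : 'I_K -> R) (t : R) : (forall k, 0 < q k + t * d k) ->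
  is_derive t (1:R) (fun t => \sum_(k < K) ff (q k + t * d k))
     (\sum_(k < K) f1 (q k + t * d k) * d k).
Proof.
move=> h; apply: (@sum_comp_der K (fun _ => ff) (fun _ => f1)) => k.
exact: ff_der.
Qed.

Lemma G1der (K : nat) (q d : 'I_K -> R) (t : R) : (forall k, 0 < q k + t * d k) ->
  is_derive t (1:R) (fun t => \sum_(k < K) d k * f1 (q k + t * d k))
     (\sum_(k < K) d k * (q k + t * d k) `^ (alpha - 2) * d k).
Proof.
move=> h; apply: (@sum_comp_der K (fun k y => d k * f1 y) (fun k y => d k * y `^ (alpha - 2))) => k.
exact: f1_der_scaled.
Qed.

Lemma G1_0 (K : nat) (q d : 'I_K -> R) :
  (\sum_(k < K) d k * f1 (q k + 0 * d k)) * 1 = \sum_(k < K) f1 (q k) * d k.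
Proof. by rewrite mulr1; apply: eq_bigr => k _; rewrite mul0r addr0 mulrC. Qed.

Lemma D_lower (K : nat) (p q : 'I_K -> R) (m : R) :
  (forall k, 0 < p k) -> (forall k, 0 < q k) ->
  (forall t, 0 <= t <= 1 -> m <= \sum_(k < K) (p k - q k) *
       (q k + t * (p k - q k)) `^ (alpha - 2) * (p k - q k)) ->
  m / 2 <= Dalpha alpha p q.
Proof.
move=> p0 q0 hm.
have pos t : 0 <= t <= 1 -> forall k, 0 < q k + t * (p k - q k).
  move=> /andP[t0 t1] k; have := p0 k; have := q0 k.
  have [->|tp] := eqVneq t 0; first by rewrite mul0r addr0.
  have tp' : 0 < t by rewrite lt_def tp t0.
  move=> a b; nra.
have := @taylor2 (fun t => \sum_(k < K) ff (q k + t * (p k - q k)))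
  (fun t => \sum_(k < K) (p k - q k) * f1 (q k + t * (p k - q k)))
  (fun t => \sum_(k < K) (p k - q k) * (q k + t * (p k - q k)) `^ (alpha - 2) * (p k - q k))
  1 m ler01.
have dG (t : R) : 0 <= t <= 1 -> is_derive t (1:R) (fun t => \sum_(k < K) ff (q k + t * (p k - q k)))
     (\sum_(k < K) (p k - q k) * f1 (q k + t * (p k - q k))).
  move=> /pos h; apply: is_derive_eq; first exact: Gder.
  by apply: eq_bigr => k _; rewrite mulrC.
move=> /(_ dG (fun t ht => @G1der _ _ _ t (pos t ht)) hm).
rewrite G1_0 expr1n mulr1 Dalpha_eq // sum3.
have -> : \sum_(k < K) ff (q k + 1 * (p k - q k)) = \sum_(k < K) ff (p k).
  by apply: eq_bigr => k _; rewrite mul1r addrC subrK.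
have -> : \sum_(k < K) ff (q k + 0 * (p k - q k)) = \sum_(k < K) ff (q k).
  by apply: eq_bigr => k _; rewrite mul0r addr0.
done.
Qed.

Lemma D_upper (K : nat) (q v : 'I_K -> R) (s M : R) : 0 <= s ->
  (forall t, 0 <= t <= s -> forall k, 0 < q k + t * v k) ->
  (forall t, 0 <= t <= s -> \sum_(k < K) v k * (q k + t * v k) `^ (alpha - 2) * v k <= M) ->
  Dalpha alpha (fun k => q k + s * v k) q <= M * s ^+ 2 / 2.
Proof.
move=> s0 pos hM.
have := @taylor2 (- (fun t => \sum_(k < K) ff (q k + t * v k)))
  (- (fun t => \sum_(k < K) v k * f1 (q k + t * v k)))
  (- (fun t => \sum_(k < K) v k * (q k + t * v k) `^ (alpha - 2) * v k))
  s (- M) s0.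
have dG (t : R) : 0 <= t <= s -> is_derive t (1:R) (- (fun t => \sum_(k < K) ff (q k + t * v k)))
     (- (\sum_(k < K) v k * f1 (q k + t * v k))).
  move=> /pos h; apply: is_deriveN; apply: is_derive_eq; first exact: Gder.
  by apply: eq_bigr => k _; rewrite mulrC.
have dG1 (t : R) : 0 <= t <= s -> is_derive t (1:R) (- (fun t => \sum_(k < K) v k * f1 (q k + t * v k)))
     (- (\sum_(k < K) v k * (q k + t * v k) `^ (alpha - 2) * v k)).
  by move=> /pos h; apply: is_deriveN; exact: G1der.
have hm (t : R) : 0 <= t <= s -> - M <= - (\sum_(k < K) v k * (q k + t * v k) `^ (alpha - 2) * v k).
  by move=> ht; rewrite lerN2 hM.
move=> /(_ dG dG1 hm) /=.
rewrite Dalpha_eq; last by move=> k; have := pos 0 (ltac:(by rewrite lexx s0)) k; rewrite mul0r addr0.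
rewrite sum3.
have -> : \sum_(k < K) f1 (q k) * (q k + s * v k - q k) = (\sum_(k < K) f1 (q k) * v k) * s.
  rewrite mulr_suml; apply: eq_bigr => k _; rewrite addrC addKr; ring.
rewrite !fctE. have -> : \sum_(k < K) v k * f1 (q k + 0 * v k) = \sum_(k < K) f1 (q k) * v k.
  by apply: eq_bigr => k _; rewrite mul0r addr0 mulrC.
have -> : \sum_(k < K) ff (q k + 0 * v k) = \sum_(k < K) ff (q k).
  by apply: eq_bigr => k _; rewrite mul0r addr0.
move=> h; lra.
Qed.
End T.

Lemma G2der (R : realType) (alpha : R) (K : nat) (g v : 'I_K -> R) (t : R) :
  (forall k, 0 < g k + t * v k) ->
  {for t, continuous (fun s : R => \sum_(k < K) v k * (g k + s * v k) `^ (alpha - 2) * v k)}.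
Proof.
move=> h.
have : is_derive t (1:R) (fun t => \sum_(k < K) (fun y => v k * y `^ (alpha - 2) * v k) (g k + t * v k))
   (\sum_(k < K) (fun y => (v k * v k) * ((alpha - 2) * y `^ (alpha - 2 - 1))) (g k + t * v k) * v k).
  apply: (@sum_comp_der R K (fun k y => v k * y `^ (alpha - 2) * v k)
     (fun k y => (v k * v k) * ((alpha - 2) * y `^ (alpha - 2 - 1))) g v t) => k.
  have -> : (fun y => v k * y `^ (alpha - 2) * v k) = (v k * v k) \*: (fun y : R => y `^ (alpha - 2)).
    by apply/funext => y; rewrite -[RHS]/((v k * v k) * y `^ (alpha - 2)); ring.
  by apply: (is_derive_eq (is_deriveZ _ (is_derive1_powR _ (h k)))).
exact: is_derive_cont.
Qed.

Theorem proposition1 (R : realType) (K : nat) (alpha : R) :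
  (2 <= K)%N ->
  C_alpha K alpha =
  ereal_inf [set x : \bar R | exists v gamma : 'I_K -> R,
     [/\ TK v, relint_simplex gamma &
       x = (\sum_(k < K) v k ^+ 2 * gamma k `^ (alpha - 2))%:E]].
Proof.
move=> _; rewrite /C_alpha.
set A := [set x : \bar R | _].
set B := [set x : \bar R | _].
have B0 : (0 <= ereal_inf B)%E.
  apply: le_ereal_inf_tmp => _ [v [g [_ _ ->]]].
  rewrite lee_fin; apply: sumr_ge0 => k _; apply: mulr_ge0; [exact: sqr_ge0 | exact: powR_ge0].
have step1 : ((2^-1)%:E * ereal_inf B <= ereal_inf A)%E.
  apply: le_ereal_inf_tmp => _ [p [q [rp rq pq ->]]].
  move: (rp) (rq) => [_ [sp p01]] [_ [sq q01]].
  have p0 k : 0 < p k by case/andP: (p01 k).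
  have q0 k : 0 < q k by case/andP: (q01 k).
  set N := norm1 (fun k => p k - q k).
  have Npos : 0 < N.
    case: (pselect (exists k, p k != q k)) => [[k pk]|nk]; last first.
      exfalso; apply: pq; apply/funext => k; apply/eqP; case: (p k =P q k) => // h.
      by exfalso; apply: nk; exists k; apply/eqP.
    rewrite /N /norm1 (bigD1 k) //=.
    have : 0 < `|p k - q k| by rewrite normr_gt0 subr_eq0.
    have : 0 <= \sum_(i < K | i != k) `|p i - q i| by apply: sumr_ge0 => i _.
    lra.
  have rel t : 0 <= t <= 1 -> relint_simplex (fun k => q k + t * (p k - q k)).
    move=> /andP[t0 t1].
    have h k : 0 < q k + t * (p k - q k) < 1.
      have /andP[a1 a2] := p01 k; have /andP[b1 b2] := q01 k.
      have e : q k + t * (p k - q k) = (1 - t) * q k + t * p k by ring.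
      rewrite e; case: (ltP t 1) => ht.
        have h1 := mulr_gt0 (ltac:(by rewrite subr_gt0) : 0 < 1 - t) b1.
        have h2 := mulr_ge0 t0 (ltW a1).
        have h3 := mulr_gt0 (ltac:(by rewrite subr_gt0) : 0 < 1 - t) (ltac:(by rewrite subr_gt0) : 0 < 1 - q k).
        have h4 := mulr_ge0 t0 (ltac:(by rewrite subr_ge0 ltW) : 0 <= 1 - p k).
        apply/andP; split; nra.
      have -> : t = 1 by lra.
      by rewrite subrr mul0r add0r mul1r a1 a2.
    split; last split => //.
      by move=> k; have /andP[h1 h2] := h k; rewrite ltW // ltW.
    by rewrite big_split /= -mulr_sumr sumrB sp sq subrr mulr0 addr0.
  have TKv : TK (fun k => (p k - q k) / N).
    split.
      rewrite /norm1 (eq_bigr (fun k => `|p k - q k| / N)); last first.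
        by move=> k _; rewrite normrM normfV (gtr0_norm Npos).
      by rewrite -mulr_suml divff // gt_eqF.
    by rewrite -mulr_suml sumrB sp sq subrr mul0r.
  have el t : 0 <= t <= 1 -> (ereal_inf B <=
     (\sum_(k < K) ((p k - q k) / N) ^+ 2 * (q k + t * (p k - q k)) `^ (alpha - 2))%:E)%E.
    move=> ht; apply: ereal_inf_lbound.
    by exists (fun k => (p k - q k) / N), (fun k => q k + t * (p k - q k)); split => //; exact: rel.
  have eq2 t : \sum_(k < K) ((p k - q k) / N) ^+ 2 * (q k + t * (p k - q k)) `^ (alpha - 2) =
     (\sum_(k < K) (p k - q k) * (q k + t * (p k - q k)) `^ (alpha - 2) * (p k - q k)) / N ^+ 2.
    rewrite mulr_suml; apply: eq_bigr => k _.
    by field; rewrite gt_eqF.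
  have e0 := el 0 (ltac:(by rewrite lexx ler01)).
  case E : (ereal_inf B) B0 e0 => [b| |] //.
  move=> b0 _.
  have hm t : 0 <= t <= 1 -> b * N ^+ 2 <=
     \sum_(k < K) (p k - q k) * (q k + t * (p k - q k)) `^ (alpha - 2) * (p k - q k).
    move=> ht; have := el t ht; rewrite E lee_fin eq2 ler_pdivlMr //.
    exact: exprn_gt0.
  have := @D_lower R alpha K p q (b * N ^+ 2) p0 q0 hm.
  rewrite -EFinM lee_fin ler_pdivlMr; last exact: exprn_gt0.
  move=> h; lra.
have step2 : (2%:E * ereal_inf A <= ereal_inf B)%E.
  apply: le_ereal_inf_tmp => _ [v [g [[nv sv] [_ [sg g01]] ->]]].
  set S := \sum_(k < K) v k ^+ 2 * g k `^ (alpha - 2).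
  have key e : 0 < e -> (ereal_inf A <= (S / 2 + e)%:E)%E.
    move=> e0.
    pose G2 := fun t : R => \sum_(k < K) v k * (g k + t * v k) `^ (alpha - 2) * v k.
    have G20 : G2 0 = S.
      rewrite /G2 /S; apply: eq_bigr => k _; rewrite mul0r addr0 expr2; ring.
    have g0 k : 0 < g k + 0 * v k by rewrite mul0r addr0; case/andP: (g01 k).
    have cG2 : {for 0, continuous G2} := @G2der R alpha K g v 0 g0.
    have near1 : \forall t \near 0, G2 t < S + 2 * e.
      apply: (cvgr_lt _ cG2); rewrite G20; lra.
    have near2 : \forall t \near 0, forall k, 0 < g k + t * v k < 1.
      apply: (@filter_forall R 'I_K (fun k t => 0 < g k + t * v k < 1) (nbhs (0:R)) _) => k.
      have ck : {for 0, continuous (fun t : R => g k + t * v k)}.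
        exact: is_derive_cont (inner_der _ _ _).
      have /andP[gk1 gk2] := g01 k.
      have n1 := cvgr_gt _ ck 0 (ltac:(by rewrite /= mul0r addr0)).
      have n2 := cvgr_lt _ ck 1 (ltac:(by rewrite /= mul0r addr0)).
      by near=> t; apply/andP; split; [near: t; exact: n1 | near: t; exact: n2].
    have nearP : \forall t \near 0, G2 t < S + 2 * e /\ forall k, 0 < g k + t * v k < 1.
      by near=> t; split; near: t.
    case/nbhs_norm0P: nearP => /= d d0 hd.
    set s := d / 2.
    have s0 : 0 < s by rewrite /s; lra.
    have hs t : 0 <= t <= s -> G2 t < S + 2 * e /\ forall k, 0 < g k + t * v k < 1.
      move=> /andP[t0 ts]; apply: hd => /=; rewrite ger0_norm //; rewrite /s in ts; lra.
    have pos t : 0 <= t <= s -> forall k, 0 < g k + t * v k.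
      by move=> ht k; have [_ /(_ k) /andP[]] := hs t ht.
    have bnd t : 0 <= t <= s -> G2 t <= S + 2 * e.
      by move=> ht; have [/ltW] := hs t ht.
    have Dup := @D_upper R alpha K g v s (S + 2 * e) (ltW s0) pos bnd.
    apply: ge_ereal_inf.
    set p := fun k => g k + s * v k.
    have p01 k : 0 < p k < 1 by have [_ /(_ k)] := hs s (ltac:(by rewrite lexx ltW)).
    have Np : norm1 (fun k => p k - g k) = s.
      rewrite /norm1 (eq_bigr (fun k => s * `|v k|)); last first.
        by move=> k _; rewrite /p addrC addKr normrM (gtr0_norm s0).
      by rewrite -mulr_sumr -/(norm1 v) nv mulr1.
    exists (Dalpha alpha p g / (norm1 (fun k => p k - g k)) ^+ 2)%:E.
      exists p, g; split => //.
      - split; first by move=> k; have /andP[h1 h2] := p01 k; rewrite ltW // ltW.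
        split => //.
        by rewrite /p big_split /= -mulr_sumr sg sv mulr0 addr0.
      - split; first by move=> k; have /andP[h1 h2] := g01 k; rewrite ltW // ltW.
        by split.
      - move=> pg.
        have vk0 k : v k = 0.
          have := congr1 (fun f => f k) pg; rewrite /p /= => /eqP.
          rewrite -subr_eq0 addrAC subrr add0r mulf_eq0 (gt_eqF s0) /=.
          by move/eqP.
        have : norm1 v = 0 by rewrite /norm1 big1 // => k _; rewrite vk0 normr0.
        by rewrite nv => /eqP; rewrite oner_eq0.
    rewrite Np lee_fin ler_pdivrMr; last exact: exprn_gt0.
    move: Dup; rewrite /p => h; lra.
  suff h : (ereal_inf A <= (S / 2)%:E)%E.
    have := lee_wpmul2l (x := 2%:E) (ltac:(by rewrite lee_fin ler0n)) h.
    by rewrite -EFinM mulrC divfK // pnatr_eq0.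
  case EA : (ereal_inf A) => [a| |]; last exact: leNye.
    rewrite lee_fin; apply/ler_addgt0Pr => e e0; rewrite -lee_fin -EA; exact: key.
  by have := key 1 ltr01; rewrite EA leye_eq.
apply/eqP; rewrite eq_le step2 /=.
have := lee_wpmul2l (x := 2%:E) (ltac:(by rewrite lee_fin ler0n)) step1.
by rewrite muleA -EFinM divff ?pnatr_eq0 // mul1e.
Unshelve. all: end_near.
Qed.
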